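(* Let $n\geq 2$ and fix indices $1\leq k\neq l\leq n$. Then $\mathrm{Aut}(W_n)$ is generated by the set $Y=\{\sigma_{kl}\}\cup\{\alpha_{(i,i+1)}\mid i=1,\dots,n-1\}$.
   Context: $W_n=\langle s_1,\dots,s_n\mid s_1^2,\dots,s_n^2\rangle$. For $1\leq i\neq j\leq n$ the partial conjugation $\sigma_{ij}\in\mathrm{Aut}(W_n)$ is defined by $\sigma_{ij}(s_j)=s_is_js_i$ and $\sigma_{ij}(s_k)=s_k$ for $k\neq j$. For $\pi\in\mathrm{Sym}(n)$, the permutation automorphism $\alpha_\pi$ is defined by $\alpha_\pi(s_k)=s_{\pi(k)}$; $(i,i+1)$ denotes a transposition. *)

(* Defs.v *)
(* The right-angled Coxeter group W_n = <s_1..s_n | s_i^2>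
   (free product of n copies of Z/2) is modelled by its normal forms:
   words over 'I_n with no two adjacent equal letters (0-based indices). *)
From mathcomp Require Import all_boot all_fingroup.
Set Implicit Arguments. Unset Strict Implicit. Unset Printing Implicit Defensive.

Definition nadj n : rel 'I_n := fun a b => a != b.

Definition push n (x : 'I_n) (w : seq 'I_n) : seq 'I_n :=
  match w with
  | y :: w' => if y == x then w' else x :: w
  | [::] => [:: x]
  end.

Lemma push_reduced n (x : 'I_n) w : sorted (@nadj n) w -> sorted (@nadj n) (push x w).
Proof.
case: w => [|y w] //= H; case: eqP => [_|Hyx].
- by case: w H => //= z w /andP[].
- rewrite /= H andbT /nadj; apply/eqP => E; apply: Hyx; by rewrite E.
Qed.

Definition reduce n (s : seq 'I_n) : seq 'I_n := foldr (@push n) [::] s.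

Lemma reduce_reduced n (s : seq 'I_n) : sorted (@nadj n) (reduce s).
Proof. by elim: s => //= x s IH; apply: push_reduced. Qed.

Record W n := MkW { wval : seq 'I_n; wvalP : sorted (@nadj n) wval }.

Definition mulW n (u v : W n) : W n := MkW (reduce_reduced (wval u ++ wval v)).
Definition oneW n : W n := @MkW n [::] isT.
Definition sW n (i : 'I_n) : W n := @MkW n [:: i] isT.

Definition extW n (f : 'I_n -> W n) (w : W n) : W n :=
  foldr (fun i acc => mulW (f i) acc) (oneW n) (wval w).

Definition is_hom n (phi : W n -> W n) : Prop :=
  forall u v, phi (mulW u v) = mulW (phi u) (phi v).

Definition is_aut n (phi : W n -> W n) : Prop := is_hom phi /\ bijective phi.

Definition sigma n (i j : 'I_n) : W n -> W n :=
  extW (fun k => if k == j then mulW (sW i) (mulW (sW j) (sW i)) else sW k).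

Definition alpha n (p : {perm 'I_n}) : W n -> W n :=
  extW (fun k => sW (p k)).

Inductive genW n (Y : (W n -> W n) -> Prop) : (W n -> W n) -> Prop :=
| gen_id : genW Y id
| gen_mul y f : Y y -> genW Y f -> genW Y (y \o f)
| gen_inv y yi f : Y y -> cancel y yi -> cancel yi y -> genW Y f ->
                   genW Y (yi \o f).

Definition Yset n (k l : 'I_n) (f : W n -> W n) : Prop :=
  f = sigma k l \/
  exists i j : 'I_n, nat_of_ord j = i.+1 /\ f = alpha (tperm i j).

(* Main.v *)
Require Import Defs.
From mathcomp Require Import all_boot all_fingroup.
Set Implicit Arguments. Unset Strict Implicit. Unset Printing Implicit Defensive.

Section Lists.
Variable n : nat.
Local Notation T := 'I_n.
Local Notation red := (sorted (@nadj n)).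

Definition act (u x : seq T) := foldr (@push n) x u.

Lemma act_cons (a : T) u x : act (a :: u) x = push a (act u x).
Proof. by []. Qed.

Lemma act_cat u v x : act (u ++ v) x = act u (act v x).
Proof. by rewrite /act foldr_cat. Qed.

Lemma act_red u x : red x -> red (act u x).
Proof. by elim: u => //= a u IH Hx; apply: push_reduced; apply: IH. Qed.

Lemma push_push (a : T) x : red x -> push a (push a x) = x.
Proof.
case: x => [|y x] /=; first by rewrite eqxx.
case: (eqVneq y a) => [->|Hya] Hx /=.
- case: x Hx => [|z x] /=; first by [].
  case/andP; rewrite /nadj => Haz _; by rewrite eq_sym (negbTE Haz).
- by rewrite eqxx.
Qed.

Lemma push_nhead (a : T) (x : seq T) : (if x is y :: _ then y != a else true) -> push a x = a :: x.
Proof. by case: x => [|y x] //= H; rewrite (negbTE H). Qed.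

Lemma act_cancel u x : red x -> act (u ++ rev u) x = x.
Proof.
elim: u x => [|a u IH] x Hx //=.
rewrite rev_cons -cats1 catA act_cat IH /=; last exact: push_reduced.
exact: push_push.
Qed.

Lemma act_cancel' u x : red x -> act (rev u ++ u) x = x.
Proof. by move=> Hx; rewrite -{2}(revK u) act_cancel. Qed.

Lemma act_revK u x : red x -> act (rev u) (act u x) = x.
Proof. by move=> Hx; rewrite -act_cat act_cancel'. Qed.

Lemma act_Krev u x : red x -> act u (act (rev u) x) = x.
Proof. by move=> Hx; rewrite -act_cat act_cancel. Qed.

Lemma act_sorted u x : red (u ++ x) -> act u x = u ++ x.
Proof.
elim: u => [|a u IH] //= H.
have Hs : red (u ++ x) by move: H; case: (u ++ x) => //= b s /andP[].
rewrite IH // push_nhead //; move: H; case: (u ++ x) => //= b s /andP[].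
by rewrite /nadj eq_sym.
Qed.

Lemma red_act_nil u : red u -> act u [::] = u.
Proof. by move=> H; rewrite act_sorted cats0. Qed.

Lemma size_push (a : T) x : size (push a x) <= (size x).+1.
Proof. by case: x => [|y x] //=; case: eqP => //= _; apply: leqW. Qed.

Lemma size_act u x : size (act u x) <= size u + size x.
Proof.
elim: u => [|a u IH] //=; apply: leq_trans (size_push _ _) _; by rewrite ltnS.
Qed.

Lemma act_push (a : T) r w : red w -> act (push a r) w = push a (act r w).
Proof.
move=> Hw; case: r => [|y r] //=.
case: (eqVneq y a) => [->|] //=.
by rewrite push_push //; apply: act_red.
Qed.

Lemma act_act u v w : red w -> act (act u v) w = act u (act v w).
Proof. by move=> Hw; elim: u => //= a u IH; rewrite act_push // IH. Qed.

Lemma red_rev u : red u -> red (rev u).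
Proof.
rewrite rev_sorted; case: u => //= a u.
by rewrite (@eq_path _ _ (@nadj n)) // => x y; rewrite /nadj eq_sym.
Qed.

Lemma red_split u (a : T) v : red (u ++ a :: v) = red (u ++ [:: a]) && red (a :: v).
Proof.
case: u => [|x u] /=; first by [].
by rewrite !cat_path /= andbT andbA.
Qed.

End Lists.

Section Group.
Variable n : nat.
Local Notation T := 'I_n.
Local Notation red := (sorted (@nadj n)).
Local Notation WW := (W n).

Lemma W_ext (u v : WW) : wval u = wval v -> u = v.
Proof.
case: u => u Hu; case: v => v Hv /= E; subst v.
by rewrite (bool_irrelevance Hu Hv).
Qed.

Lemma wval_mul (u v : WW) : wval (mulW u v) = act (wval u) (wval v).
Proof.
rewrite /= /reduce -/(act (wval u ++ wval v) [::]) act_cat.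
by rewrite (red_act_nil (wvalP v)).
Qed.

Lemma mulWA (u v w : WW) : mulW (mulW u v) w = mulW u (mulW v w).
Proof. by apply: W_ext; rewrite !wval_mul act_act // wvalP. Qed.

Lemma mul1W (u : WW) : mulW (oneW n) u = u.
Proof. by apply: W_ext; rewrite wval_mul. Qed.

Lemma mulW1 (u : WW) : mulW u (oneW n) = u.
Proof. by apply: W_ext; rewrite wval_mul red_act_nil // wvalP. Qed.

Definition invW (u : WW) : WW := MkW (red_rev (wvalP u)).

Lemma mulWV (u : WW) : mulW u (invW u) = oneW n.
Proof.
apply: W_ext; rewrite wval_mul /= -(red_act_nil (red_rev (wvalP u))).
by rewrite -act_cat act_cancel.
Qed.

Lemma mulVW (u : WW) : mulW (invW u) u = oneW n.
Proof.
apply: W_ext; rewrite wval_mul /= -{2}(red_act_nil (wvalP u)).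
by rewrite -act_cat act_cancel'.
Qed.

Lemma sWK (i : T) : mulW (sW i) (sW i) = oneW n.
Proof. by apply: W_ext; rewrite wval_mul /= eqxx. Qed.

Section Ext.
Variable f : T -> WW.

Definition Ef (l : seq T) := foldr (fun i acc => mulW (f i) acc) (oneW n) l.

Lemma Ef_cat u v : Ef (u ++ v) = mulW (Ef u) (Ef v).
Proof. by elim: u => [|a u IH] /=; rewrite ?mul1W // IH -mulWA. Qed.

Hypothesis finv : forall i, mulW (f i) (f i) = oneW n.

Lemma Ef_push a x : Ef (push a x) = mulW (f a) (Ef x).
Proof.
case: x => [|y x] //=; case: eqVneq => [->|] //=.
by rewrite -mulWA finv mul1W.
Qed.

Lemma Ef_act u x : Ef (act u x) = Ef (u ++ x).
Proof. by elim: u => [|a u IH] //=; rewrite Ef_push IH. Qed.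

Lemma extW_hom : is_hom (extW f).
Proof. by move=> u v; rewrite /extW -/(Ef _) -/(Ef _) -/(Ef _) wval_mul Ef_act Ef_cat. Qed.

End Ext.

Lemma extW_gen (f : T -> WW) i : extW f (sW i) = f i.
Proof. by rewrite /extW /= mulW1. Qed.

Lemma extW_eq (f g : T -> WW) : f =1 g -> extW f =1 extW g.
Proof. by move=> E w; rewrite /extW; elim: (wval w) => //= a l ->; rewrite E. Qed.

Lemma hom1 (phi : WW -> WW) : is_hom phi -> phi (oneW n) = oneW n.
Proof.
move=> H; have E : phi (oneW n) = mulW (phi (oneW n)) (phi (oneW n)).
  by rewrite -H mulW1.
by rewrite -{2}(mulVW (phi (oneW n))) {3}E -mulWA mulVW mul1W.
Qed.

Lemma word_gen (w : WW) : w = Ef (@sW n) (wval w).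
Proof.
apply: W_ext; rewrite -{1}(red_act_nil (wvalP w)).
by elim: (wval w) => // a l IH; rewrite [RHS]wval_mul -IH.
Qed.

Lemma hom_ext (phi : WW -> WW) : is_hom phi -> phi =1 extW (fun i => phi (sW i)).
Proof.
move=> H w; rewrite {1}(word_gen w) /extW; elim: (wval w) => /= [|a l <-].
  exact: hom1.
by rewrite H.
Qed.

Lemma hom_eq (phi psi : WW -> WW) : is_hom phi -> is_hom psi ->
  (forall i, phi (sW i) = psi (sW i)) -> phi =1 psi.
Proof.
move=> Hp Hq E w; rewrite (hom_ext Hp) (hom_ext Hq); exact: extW_eq.
Qed.

Lemma hom_comp (phi psi : WW -> WW) : is_hom phi -> is_hom psi -> is_hom (phi \o psi).
Proof. by move=> Hp Hq u v /=; rewrite Hq Hp. Qed.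

Lemma hom_id : is_hom (@id WW).
Proof. by []. Qed.

Lemma wval_ext (f : T -> WW) (w : WW) :
  wval (extW f w) = foldr (fun i acc => act (wval (f i)) acc) [::] (wval w).
Proof. by rewrite /extW; elim: (wval w) => // a l IH; rewrite [LHS]wval_mul IH. Qed.

End Group.

Section Pal.
Variable n : nat.
Local Notation T := 'I_n.
Local Notation red := (sorted (@nadj n)).

Lemma pal_dec (t : seq T) : red t -> rev t = t -> t != [::] ->
  exists w a, t = w ++ a :: rev w.
Proof.
move: {2}(size t) (leqnn (size t)) => m; elim: m t => [|m IH] t.
  by rewrite leqn0 => /nilP ->.
case: t => [|x t] //= Hsz Hs Hr _.
case/lastP: t Hsz Hs Hr => [|m' y] Hsz Hs Hr; first by exists [::], x.
move: Hr; rewrite rev_cons rev_rcons /= => -[Eyx Hr']; subst y.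
case: (rcons_inj Hr') => Hm.
case: m' Hsz Hs Hm Hr' => [|z m'] Hsz Hs Hm Hr'.
  by move: Hs; rewrite /= /nadj eqxx.
have Hs' : red (z :: m').
  by move: Hs; rewrite rcons_path => /andP[/path_sorted].
have [w [a Ew]] : exists w a, z :: m' = w ++ a :: rev w.
  apply: IH => //; move: Hsz; rewrite size_rcons /= ltnS; apply: leq_trans; exact: leqnSn.
exists (x :: w), a; rewrite Ew rcons_cat /= rev_cons //.
Qed.

Lemma pref3 (w1 w2 : seq T) a1 a2 r1 r2 : w1 ++ a1 :: r1 = w2 ++ a2 :: r2 ->
  (w1 = w2 /\ a1 = a2) \/ (exists v, w2 = w1 ++ a1 :: v) \/ (exists v, w1 = w2 ++ a2 :: v).
Proof.
elim: w1 w2 => [|b w1 IH] [|c w2] /=.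
- by case=> ->; left.
- by case=> -> _; right; left; exists w2.
- by case=> -> _; right; right; exists w1.
- case=> -> /IH [[-> ->]|[[v ->]|[v ->]]]; first by left.
  + by right; left; exists v.
  + by right; right; exists v.
Qed.

Lemma pingpong (w : seq T) a (g : seq T) : red (w ++ a :: rev w) -> red g ->
  ~ (exists r, g = w ++ a :: r) -> exists r, act (w ++ a :: rev w) g = w ++ a :: r.
Proof.
move=> Ht Hg Hn.
rewrite act_cat act_cons.
set h := act (rev w) g.
have Hh : red h by apply: act_red.
have Hgh : g = act w h by rewrite /h act_Krev.
have Hwa : red (w ++ [:: a]) by move: Ht; rewrite red_split => /andP[].
case Eh: h Hh Hgh => [|y h'] Hh Hgh.
- exists [::]; rewrite push_nhead //= act_sorted // red_split Hwa //.
- case: (eqVneq y a) => [Eya|Nya].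
  + exfalso; apply: Hn; exists h'; rewrite Hgh -Eya act_sorted // red_split.
    by rewrite Eya Hwa -Eya.
  + exists (y :: h'); rewrite push_nhead // act_sorted // red_split Hwa /=.
    by rewrite /nadj eq_sym Nya.
Qed.

End Pal.

Section SigAlpha.
Variable n : nat.
Local Notation T := 'I_n.
Local Notation WW := (W n).

Lemma invol3 (x y : WW) : mulW x x = oneW n -> mulW y y = oneW n ->
  mulW (mulW x (mulW y x)) (mulW x (mulW y x)) = oneW n.
Proof.
move=> Hx Hy.
by rewrite !mulWA -(mulWA x x) Hx mul1W -(mulWA y y) Hy mul1W.
Qed.

Lemma sigma_hom (i j : T) : is_hom (sigma i j).
Proof.
apply: extW_hom => k; case: (k == j); first by apply: invol3; apply: sWK.
exact: sWK.
Qed.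

Lemma sigma_gen (i j z : T) :
  sigma i j (sW z) = if z == j then mulW (sW i) (mulW (sW j) (sW i)) else sW z.
Proof. exact: extW_gen. Qed.

Lemma sigmaK (i j : T) : i != j -> cancel (sigma i j) (sigma i j).
Proof.
move=> Hij w; apply: (@hom_eq _ (sigma i j \o sigma i j) id) => //.
- by apply: hom_comp; apply: sigma_hom.
- move=> z /=; rewrite sigma_gen; case: eqP => [->|Hz]; last first.
    by rewrite sigma_gen; case: eqP.
  by rewrite !sigma_hom !sigma_gen (negbTE Hij) eqxx !mulWA sWK mulW1 -mulWA sWK mul1W.
Qed.

Lemma alpha_hom (p : {perm T}) : is_hom (alpha p).
Proof. by apply: extW_hom => k; apply: sWK. Qed.

Lemma alpha_gen (p : {perm T}) z : alpha p (sW z) = sW (p z).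
Proof. exact: extW_gen. Qed.

Lemma alphaM (p q : {perm T}) : alpha p \o alpha q =1 alpha (q * p).
Proof.
apply: hom_eq; [apply: hom_comp; apply: alpha_hom|apply: alpha_hom|].
by move=> z /=; rewrite !alpha_gen permM.
Qed.

Lemma alpha1 : alpha (1 : {perm T}) =1 id.
Proof.
apply: hom_eq => //; first exact: alpha_hom.
by move=> z; rewrite alpha_gen perm1.
Qed.

Lemma alphaK (p : {perm T}) : cancel (alpha p) (alpha p^-1).
Proof. by move=> w; rewrite -[_ (_ w)]/((_ \o _) w) alphaM mulgV alpha1. Qed.

Lemma alphaKV (p : {perm T}) : cancel (alpha p^-1) (alpha p).
Proof. by move=> w; rewrite -[_ (_ w)]/((_ \o _) w) alphaM mulVg alpha1. Qed.

Lemma alpha_conj (p : {perm T}) a b :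
  alpha p \o sigma a b \o alpha p^-1 =1 sigma (p a) (p b).
Proof.
apply: hom_eq.
- by apply: hom_comp; [apply: hom_comp|]; [apply: alpha_hom|apply: sigma_hom|apply: alpha_hom].
- exact: sigma_hom.
move=> z /=; rewrite alpha_gen sigma_gen sigma_gen.
have -> : ((p^-1)%g z == b) = (z == p b).
  by rewrite -(inj_eq (@perm_inj _ p)) permKV.
case: eqP => [_|_]; last by rewrite alpha_gen permKV.
by rewrite !alpha_hom !alpha_gen.
Qed.

End SigAlpha.

From mathcomp Require Import zify.
From Stdlib Require Import Classical.

Section Gen.
Ltac redt := repeat first [apply: push_reduced | apply: act_red]; done.
Variables (n : nat) (k l : 'I_n).
Hypothesis hkl : k != l.
Local Notation T := 'I_n.
Local Notation WW := (W n).
Local Notation red := (sorted (@nadj n)).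

Definition G (phi : WW -> WW) := exists f, genW (Yset k l) f /\ f =1 phi.

Lemma G_ext phi psi : G phi -> phi =1 psi -> G psi.
Proof. by case=> f [Hf E] E'; exists f; split => // w; rewrite E E'. Qed.

Lemma G_id : G id.
Proof. by exists id; split => //; constructor. Qed.

Lemma genW_comp f g : genW (Yset k l) f -> genW (Yset k l) g ->
  exists h, genW (Yset k l) h /\ h =1 f \o g.
Proof.
move=> Hf Hg; elim: Hf => [|y f' Hy _ [h [Hh E]]|y yi f' Hy c1 c2 _ [h [Hh E]]].
- by exists g.
- by exists (y \o h); split; [apply: gen_mul|move=> w /=; rewrite E].
- by exists (yi \o h); split; [apply: (gen_inv Hy c1 c2)|move=> w /=; rewrite E].
Qed.

Lemma G_comp phi psi : G phi -> G psi -> G (phi \o psi).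
Proof.
case=> f [Hf Ef] [g [Hg Eg]]; case: (genW_comp Hf Hg) => h [Hh E].
by exists h; split => // w; rewrite E /= Eg Ef.
Qed.

Lemma G_Y y : Yset k l y -> G y.
Proof. by move=> Hy; exists (y \o id); split => //; apply: gen_mul => //; apply: gen_id. Qed.

Lemma G_tperm_aux d : forall i j : T, nat_of_ord j = i + d.+1 -> G (alpha (tperm i j)).
Proof.
elim: d => [|d IH] i j Ej.
  by apply: G_Y; right; exists i, j; split => //; rewrite Ej addn1.
have Hm : i + d.+1 < n by have := ltn_ord j; lia.
set m := Ordinal Hm.
have Hmi : m != i by rewrite -val_eqE /=; apply/eqP; lia.
have Hji : j != i by rewrite -val_eqE /=; apply/eqP; lia.
have E : tperm i j = (tperm m j * (tperm i m * tperm m j))%g.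
  by rewrite -{1}(tpermV m j) -conjgE tpermJ tpermL tpermD.
apply: (G_ext (phi := (alpha (tperm m j) \o alpha (tperm i m)) \o alpha (tperm m j))).
- have Ha : G (alpha (tperm m j)).
    by apply: G_Y; right; exists m, j; split => //=; lia.
  apply: G_comp; [apply: G_comp|] => //.
  exact: (IH i m).
- by move=> w /=; rewrite E -alphaM /= -alphaM.
Qed.

Lemma G_tperm (i j : T) : G (alpha (tperm i j)).
Proof.
case: (ltngtP i j) => Hij.
- by apply: (G_tperm_aux (d := j - i - 1)); lia.
- by rewrite tpermC; apply: (G_tperm_aux (d := i - j - 1)); lia.
- have -> : i = j by apply: val_inj.
  by rewrite tperm1; apply: (G_ext G_id) => w; rewrite alpha1.
Qed.

Lemma G_alpha (p : {perm T}) : G (alpha p).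
Proof.
case: (prod_tpermP p) => ts -> _; elim: ts => [|[a b] ts IH].
  by rewrite big_nil; apply: (G_ext G_id) => w; rewrite alpha1.
rewrite big_cons; apply: (G_ext (G_comp IH (G_tperm a b))) => w.
by rewrite alphaM.
Qed.

Lemma G_sigma (x y : T) : x != y -> G (sigma x y).
Proof.
move=> Hxy.
have H1 : G (sigma k l) by apply: G_Y; left.
pose p1 := tperm k x.
have H2 : G (sigma x (p1 l)).
  apply: (G_ext (G_comp (G_comp (G_alpha p1) H1) (G_alpha p1^-1))) => w.
  by rewrite alpha_conj tpermL.
have Hx : x != p1 l.
  by rewrite -{1}(tpermL k x) -/p1 (inj_eq (@perm_inj _ p1)).
pose p2 := tperm (p1 l) y.
apply: (G_ext (G_comp (G_comp (G_alpha p2) H2) (G_alpha p2^-1))) => w.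
by rewrite alpha_conj tpermL tpermD // eq_sym.
Qed.

Definition TT (phi : WW -> WW) (i : T) := wval (phi (sW i)).
Definition cost (phi : WW -> WW) := \sum_(i < n) size (TT phi i).
Definition X (t g : seq T) := exists w a r, t = w ++ a :: rev w /\ g = w ++ a :: r.

Lemma TT_inj phi : is_aut phi -> forall i j, TT phi i = TT phi j -> i = j.
Proof.
case=> _ /bij_inj Hi i j /W_ext /Hi /(congr1 (@wval _)) /= [] //.
Qed.

Lemma TT_dec phi i : is_aut phi -> exists w a, TT phi i = w ++ a :: rev w.
Proof.
case=> Hh Hb; set t := TT phi i.
have Ht : red t by apply: wvalP.
have Htt : act t t = [::].
  by have := congr1 (@wval _) (Hh (sW i) (sW i)); rewrite sWK hom1 // wval_mul.
have Hr : rev t = t.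
  by have := act_revK t Ht; rewrite Htt red_act_nil // red_rev.
apply: pal_dec => //; apply/eqP => Ht0.
have : phi (sW i) = phi (oneW n) by rewrite hom1 //; apply: W_ext.
by move/(bij_inj Hb)/(congr1 (@wval _)).
Qed.

Lemma size_red3 (w1 v : seq T) a1 a2 :
  red (w1 ++ a1 :: rev w1) ->
  size (act (w1 ++ a1 :: rev w1)
       (act ((w1 ++ a1 :: v) ++ a2 :: rev (w1 ++ a1 :: v)) (w1 ++ a1 :: rev w1)))
  < size ((w1 ++ a1 :: v) ++ a2 :: rev (w1 ++ a1 :: v)).
Proof.
move=> Ht; rewrite -{2}(red_act_nil Ht).
rewrite rev_cat rev_cons -cats1.
rewrite !act_cat !act_cons !act_cat !act_cons.
have Hn : forall x : seq T, act [::] x = x by [].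
rewrite Hn !act_revK ?push_push; try by redt.
set x0 := act (rev w1) [::].
have h0 := size_act (rev w1) [::].
have h1 := size_act (rev v) x0.
have h2 := size_push a2 (act (rev v) x0).
have h3 := size_act v (push a2 (act (rev v) x0)).
have h4 := size_act w1 (act v (push a2 (act (rev v) x0))).
rewrite /= size_rev in h0; rewrite size_rev in h1.
rewrite !size_cat /= !size_cat !size_rev /=.
rewrite -/x0 in h0 h1 h2 h3 h4 *; lia.
Qed.

Lemma cost_lt (F F' : T -> nat) j : (forall z, z != j -> F' z = F z) -> F' j < F j ->
  \sum_(i < n) F' i < \sum_(i < n) F i.
Proof.
move=> E Hj; rewrite (bigD1 j) //= [X in _ < X](bigD1 j) //=.
rewrite (eq_bigr F); first by rewrite ltn_add2r.
by move=> z; apply: E.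
Qed.

Lemma reduce_step phi i j w1 a1 v a2 : is_aut phi -> i != j ->
  TT phi i = w1 ++ a1 :: rev w1 ->
  TT phi j = (w1 ++ a1 :: v) ++ a2 :: rev (w1 ++ a1 :: v) ->
  is_aut (phi \o sigma i j) /\ cost (phi \o sigma i j) < cost phi.
Proof.
move=> [Hh Hb] Hij Ei Ej; split.
  split; first by apply: hom_comp => //; apply: sigma_hom.
  by apply: bij_comp => //; exists (sigma i j); apply: sigmaK.
apply: (cost_lt (j := j)) => [z Hz|].
  by rewrite /TT /= sigma_gen (negbTE Hz).
rewrite /TT /= sigma_gen eqxx !Hh !wval_mul -!/(TT phi _) Ei Ej.
apply: size_red3; rewrite -Ei; exact: wvalP.
Qed.

Lemma terminal phi : is_aut phi ->
  (forall i j g, i != j -> X (TT phi i) g -> X (TT phi j) g -> False) ->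
  exists p : {perm T}, phi =1 alpha p.
Proof.
move=> Ha NoOv; have [Hh Hb] := Ha.
pose Ev (l : seq T) := foldr (fun i acc => act (TT phi i) acc) [::] l.
have HEv : forall w, wval (phi w) = Ev (wval w).
  by move=> w; rewrite (hom_ext Hh) wval_ext.
have HEr : forall l, red (Ev l).
  by elim=> //= a l' IH; apply: act_red.
have HX : forall l' x, red (x :: l') -> X (TT phi x) (Ev (x :: l')).
  elim=> [|y l'' IH] x Hs.
  - have [w [a Ew]] := TT_dec x Ha.
    have [r Er] : exists r, act (TT phi x) [::] = w ++ a :: r.
      rewrite Ew; apply: pingpong => //; first by rewrite -Ew; apply: wvalP.
      by case=> r; case: w {Ew}.
    by exists w, a, r.
  - move: Hs => /= /andP[Hxy Hs].
    have [w [a Ew]] := TT_dec x Ha.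
    have [r Er] : exists r, act (TT phi x) (Ev (y :: l'')) = w ++ a :: r.
      rewrite Ew; apply: pingpong => //; first by rewrite -Ew; apply: wvalP.
      case=> r Er; apply: (NoOv x y (Ev (y :: l''))) => //.
        by exists w, a, r.
      exact: IH.
    by exists w, a, r.
have HC : forall c, exists x, TT phi x = [:: c].
  move=> c; case: Hb => g Hg1 Hg2.
  have := HEv (g (sW c)); rewrite Hg2 /=.
  have := wvalP (g (sW c)).
  case: (wval (g (sW c))) => [|x l'] //= Hs Hc.
  have [w [a [r [Ew Ec]]]] := HX l' x Hs.
  have {}Ec : [:: c] = w ++ a :: r by exact: (etrans Hc Ec).
  case: w Ew Ec => [|b w] Ew /=; last by case=> _; case: w {Ew}.
  by case=> -> _; exists x; rewrite Ew.
pose r c := odflt c [pick x | TT phi x == [:: c]].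
have Hr : forall c, TT phi (r c) = [:: c].
  move=> c; rewrite /r; case: pickP => [x /eqP //|H].
  by have [x Hx] := HC c; move: (H x); rewrite Hx eqxx.
have Hrinj : injective r by move=> c1 c2 E; have := Hr c1; rewrite E Hr => -[].
have [ri Hri1 Hri2] := injF_bij Hrinj.
exists (perm (can_inj Hri2)).
apply: hom_eq => //; first exact: alpha_hom.
move=> x; rewrite alpha_gen permE; apply: W_ext.
by rewrite -/(TT phi x) -{1}(Hri2 x) Hr.
Qed.

Lemma main_ind m : forall phi, cost phi < m -> is_aut phi -> G phi.
Proof.
elim: m => // m IH phi Hc Ha.
have Hs : forall i j w1 a1 v a2, i != j ->
    TT phi i = w1 ++ a1 :: rev w1 ->
    TT phi j = (w1 ++ a1 :: v) ++ a2 :: rev (w1 ++ a1 :: v) -> G phi.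
  move=> i j w1 a1 v a2 Hij Ei Ej.
  have [Ha' Hc'] := reduce_step Ha Hij Ei Ej.
  have HG := IH _ (leq_trans Hc' Hc) Ha'.
  apply: (G_ext (G_comp HG (G_sigma Hij))) => w /=.
  by rewrite sigmaK.
case: (classic (exists i j g, i != j /\ X (TT phi i) g /\ X (TT phi j) g)).
- case=> i [j [g [Hij [[w1 [a1 [r1 [Ei Eg1]]]] [w2 [a2 [r2 [Ej Eg2]]]]]]]].
  have := pref3 (etrans (esym Eg1) Eg2).
  case=> [[E1 E2]|[[v Ev]|[v Ev]]].
  + by move: Hij; rewrite (TT_inj Ha (etrans Ei (etrans (congr2 _ E1 (congr2 _ E2 (congr1 _ E1))) (esym Ej)))) eqxx.
  + by apply: (Hs i j w1 a1 v a2) => //; rewrite Ej Ev.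
  + by apply: (Hs j i w2 a2 v a1) => //; [rewrite eq_sym | rewrite Ei Ev].
- move=> NoOv.
  have [p Hp] : exists p : {perm T}, phi =1 alpha p.
    apply: terminal => // i j g Hij Hi Hj; apply: NoOv; by exists i, j, g.
  by apply: (G_ext (G_alpha p)) => w; rewrite Hp.
Qed.

End Gen.

Theorem proposition2p1 (n : nat) (hn : 2 <= n) (k l : 'I_n) (hkl : k != l) :
  (forall y, Yset k l y -> is_aut y) /\
  (forall phi : W n -> W n, is_aut phi ->
     exists f, genW (Yset k l) f /\ f =1 phi).
Proof.
split.
- move=> y [->|[i [j [_ ->]]]].
  + split; first exact: sigma_hom.
    by exists (sigma k l); apply: sigmaK.
  + split; first exact: alpha_hom.
    by exists (alpha (tperm i j)^-1); [apply: alphaK|apply: alphaKV].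
- move=> phi Ha; exact: (main_ind hkl (ltnSn _) Ha).
Qed.
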